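(* Let $T$ be a $k$-IET on $I=[\ell,r)$ over the ordered alphabet $\mathcal{A}=\{a_1<\dots<a_k\}$ with partition $(I_a)_{a\in\mathcal{A}}$ and permutation $\pi\in S_{\mathcal{A}}$. Suppose $|I_{a_1}|=|I_{\pi(a_1)}|$ and $a_1\neq\pi(a_1)$. Let $I'=[\ell+|I_{a_1}|,r)$, $\mathcal{A}'=\mathcal{A}\setminus\{a_1\}$ (with the induced order) and define $\pi'\in S_{\mathcal{A}'}$ by $\pi'(a)=\pi(a_1)$ if $a=\pi^{-1}(a_1)$ and $\pi'(a)=\pi(a)$ otherwise. Then the map induced by $T$ on $I'$ (the first-return map $x\mapsto T^{\nu(x)}(x)$, $\nu(x)=\min\{n>0:T^n(x)\in I'\}$), denoted $\lambda(T)$, is the $(k-1)$-IET on $I'$ over $\mathcal{A}'$ with partition $(I_a)_{a\in\mathcal{A}'}$ and permutation $\pi'$. Moreover, for every $x\in I'$, $\Omega_T(x)=\varphi(\Omega_{\lambda(T)}(x))$, where $\varphi:\mathcal{A}'^*\to\mathcal{A}^*$ (extended to infinite words) is the morphism with $\varphi(\pi(a_1))=\pi(a_1)a_1$ and $\varphi(c)=c$ for every letter $c\neq\pi(a_1)$.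
   Context: A $k$-IET $T$ on $I=[\ell,r)$ over $\mathcal{A}$ is given by a partition of $I$ into left-closed right-open intervals $(I_a)_{a\in\mathcal{A}}$ of positive length, with $I_a$ to the left of $I_b$ whenever $a<b$, and a permutation $\pi$ of $\mathcal{A}$; $T(x)=x+\tau_a$ for $x\in I_a$ where $\tau_a=\sum_{b:\,\pi^{-1}(b)<\pi^{-1}(a)}|I_b|-\sum_{b<a}|I_b|$ (so the image intervals $T(I_{\pi(a_1)}),\dots,T(I_{\pi(a_k)})$ appear from left to right). The trajectory of $x$ under an IET $S$ over an alphabet $\mathcal{C}$ with partition $(J_c)$ is $\Omega_S(x)=w_0w_1\cdots$ with $w_i=c$ iff $S^i(x)\in J_c$. *)

(* Defs.v *)
From Stdlib Require Import ClassicalEpsilon.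
From mathcomp Require Import all_boot all_order all_algebra.
From mathcomp Require Import reals.
Set Implicit Arguments. Unset Strict Implicit. Unset Printing Implicit Defensive.
Import Order.TTheory GRing.Theory Num.Theory.
Local Open Scope ring_scope.

(* An IET is described by:
   - [alpha : seq L] : the alphabet listed in increasing order (uniq);
   - [len : L -> R]  : the length |I_a| of each subinterval;
   - [pi : L -> L]   : the permutation, a bijection of the letters of alpha;
   - [l]             : the left endpoint of I. *)

Section IET.
Variables (R : realType) (L : eqType).

Definition is_iet (alpha : seq L) (len : L -> R) (pi : L -> L) : Prop :=
  [/\ uniq alpha, (forall a, a \in alpha -> 0 < len a)
    & perm_eq (map pi alpha) alpha].

Definition pre_len (s : seq L) (len : L -> R) (a : L) : R :=
  \sum_(b <- take (index a s) s) len b.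

Definition in_subint (l : R) (alpha : seq L) (len : L -> R) (a : L) (x : R) : bool :=
  (a \in alpha) &&
  ((l + pre_len alpha len a <= x) && (x < l + pre_len alpha len a + len a)).

(* translation vector tau_a = sum_{pi^-1 b < pi^-1 a} |I_b| - sum_{b<a} |I_b|;
   the images appear in the order [map pi alpha] = [pi a_1; ...; pi a_k]. *)
Definition tau (alpha : seq L) (len : L -> R) (pi : L -> L) (a : L) : R :=
  pre_len (map pi alpha) len a - pre_len alpha len a.

(* the IET map (identity outside I, irrelevant) *)
Definition iet (l : R) (alpha : seq L) (len : L -> R) (pi : L -> L) (x : R) : R :=
  match [seq a <- alpha | in_subint l alpha len a x] with
  | a :: _ => x + tau alpha len pi a
  | [::] => x
  end.

(* letter coding of a point (the default d is only used outside I) *)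
Definition letter (d : L) (l : R) (alpha : seq L) (len : L -> R) (y : R) : L :=
  head d [seq a <- alpha | in_subint l alpha len a y].

Definition traj (d : L) (l : R) (alpha : seq L) (len : L -> R)
  (S : R -> R) (x : R) : nat -> L :=
  fun i => letter d l alpha len (iter i S x).

(* first return time nu(x) = min {n > 0 | S^n x in J} (0 if none) *)
Definition return_time (S : R -> R) (J : pred R) (x : R) : nat :=
  match excluded_middle_informative
          (exists n, (fun n => (0 < n)%N && J (iter n S x)) n) with
  | left H => ex_minn H
  | right _ => 0%N
  end.

Definition induced (S : R -> R) (J : pred R) (x : R) : R :=
  iter (return_time S J x) S x.

(* the morphism phi for given a1 and b = pi(a1) *)
Definition phi_sub (a1 b : L) (c : L) : seq L :=
  if c == b then [:: b; a1] else [:: c].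

Definition phi_prefix (a1 b : L) (w : nat -> L) (n : nat) : seq L :=
  flatten [seq phi_sub a1 b (w i) | i <- iota 0 n].

End IET.

(* Main.v *)
Require Import Defs.
From mathcomp Require Import all_boot all_order all_algebra.
From mathcomp Require Import reals.
From mathcomp Require Import ring lra.
From Stdlib Require Import ClassicalEpsilon.
Import Order.TTheory GRing.Theory Num.Theory.
Local Open Scope ring_scope.

Lemma pre_len_head (R : realType) (L : eqType) (c : L) s (len : L -> R) :
  pre_len (c :: s) len c = 0.
Proof. by rewrite /pre_len /= eqxx big_nil. Qed.

Lemma pre_len_cons (R : realType) (L : eqType) (c b : L) s (len : L -> R) :
  b != c -> pre_len (c :: s) len b = len c + pre_len s len b.
Proof. by move=> nbc; rewrite /pre_len /= eq_sym (negbTE nbc) /= big_cons. Qed.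

Lemma pre_len_ge0 (R : realType) (L : eqType) s (len : L -> R) b :
  (forall a, a \in s -> 0 < len a) -> 0 <= pre_len s len b.
Proof.
move=> H; rewrite /pre_len big_seq; apply: sumr_ge0 => i /mem_take /H.
exact: ltW.
Qed.

Lemma pre_len_le (R : realType) (L : eqType) s (len : L -> R) b :
  (forall a, a \in s -> 0 < len a) -> b \in s ->
  pre_len s len b + len b <= \sum_(a <- s) len a.
Proof.
elim: s => [|c s IH] //= pos bin.
rewrite big_cons; case: (eqVneq b c) => [->|bc].
  rewrite pre_len_head add0r lerDl big_seq; apply: sumr_ge0 => i ins.
  by apply: ltW; apply: pos; rewrite inE ins orbT.
rewrite pre_len_cons // -addrA lerD2l; apply: IH.
  by move=> a ain; apply: pos; rewrite inE ain orbT.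
by move: bin; rewrite inE (negbTE bc).
Qed.

Lemma filter_in_subint (R : realType) (L : eqType) (alpha : seq L) (len : L -> R) (l0 x : R) a :
  uniq alpha -> (forall b, b \in alpha -> 0 < len b) ->
  in_subint l0 alpha len a x ->
  exists t, [seq b <- alpha | in_subint l0 alpha len b x] = a :: t.
Proof.
elim: alpha l0 => [|c s IH] l0 //= /andP[cs us] pos.
have pos' : forall b, b \in s -> 0 < len b.
  by move=> b bin; apply: pos; rewrite inE bin orbT.
have eqf : [seq b <- s | in_subint l0 (c :: s) len b x] =
           [seq b <- s | in_subint (l0 + len c) s len b x].
  apply: eq_in_filter => b bs.
  have bc : b != c by apply: contraNneq cs => <-.
  by rewrite /in_subint inE bs orbT pre_len_cons // !addrA.
case: (eqVneq a c) => [->|ac] hin.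
  by rewrite hin; eexists.
have ais : a \in s by move: hin; rewrite /in_subint inE (negbTE ac) => /andP[].
have -> : in_subint l0 (c :: s) len c x = false.
  move: hin; rewrite /in_subint pre_len_head pre_len_cons // => /and3P[_ h1 h2].
  have hp := @pre_len_ge0 R L s len a pos'.
  apply/negP => /and3P[_ h3 h4]; move: h1 h4 hp; clear; move=> h1 h4 hp; lra.
rewrite eqf; apply: IH => //.
by move: hin; rewrite /in_subint inE (negbTE ac) pre_len_cons // !addrA orFb.
Qed.

Lemma in_subint_exists (R : realType) (L : eqType) (alpha : seq L) (len : L -> R) (l0 x : R) :
  uniq alpha -> (forall b, b \in alpha -> 0 < len b) ->
  l0 <= x -> x < l0 + \sum_(b <- alpha) len b ->
  exists a, in_subint l0 alpha len a x.
Proof.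
elim: alpha l0 => [|c s IH] l0 /=; first by rewrite big_nil addr0 => _ _ h1 h2; lra.
move=> /andP[cs us] pos h1 h2.
have pos' : forall b, b \in s -> 0 < len b.
  by move=> b bin; apply: pos; rewrite inE bin orbT.
case: (ltP x (l0 + len c)) => hc.
  by exists c; rewrite /in_subint mem_head pre_len_head addr0 h1 hc.
have [b hb] : exists b, in_subint (l0 + len c) s len b x.
  by apply: IH => //; move: h2; rewrite big_cons addrA.
have bs : b \in s by case/andP: hb.
have bc : b != c by apply: contraNneq cs => <-.
by exists b; move: hb; rewrite /in_subint inE bs orbT pre_len_cons // !addrA.
Qed.

Lemma iet_val (R : realType) (L : eqType) (alpha : seq L) (len : L -> R) pi (l0 x : R) a :
  uniq alpha -> (forall b, b \in alpha -> 0 < len b) ->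
  in_subint l0 alpha len a x -> iet l0 alpha len pi x = x + tau alpha len pi a.
Proof. by move=> u p h; rewrite /iet; have [t ->] := @filter_in_subint _ _ _ _ _ _ _ u p h. Qed.

Lemma letter_val (R : realType) (L : eqType) d (alpha : seq L) (len : L -> R) (l0 x : R) a :
  uniq alpha -> (forall b, b \in alpha -> 0 < len b) ->
  in_subint l0 alpha len a x -> letter d l0 alpha len x = a.
Proof. by move=> u p h; rewrite /letter; have [t ->] := @filter_in_subint _ _ _ _ _ _ _ u p h. Qed.

Lemma return_timeE (R : realType) (S : R -> R) (J : pred R) x n :
  (0 < n)%N -> J (iter n S x) -> (forall m, (0 < m)%N -> (m < n)%N -> ~~ J (iter m S x)) ->
  return_time S J x = n.
Proof.
move=> n0 Jn mn; rewrite /return_time.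
case: excluded_middle_informative => [H|H]; last first.
  by exfalso; apply: H; exists n; rewrite n0.
case: ex_minnP => m /andP[m0 Jm] mmin.
apply/eqP; rewrite eqn_leq mmin ?n0 ?Jn //=.
rewrite leqNgt; apply/negP => lt; by move: (mn m m0 lt); rewrite Jm.
Qed.

Lemma pre_len_map_f (R : realType) (L : eqType) (len : L -> R) (a1 c a : L) s :
  len a1 = len c -> a != c -> a != a1 ->
  pre_len (map (fun b => if b == a1 then c else b) s) len a = pre_len s len a.
Proof.
move=> hl ac aa; elim: s => [|b s IH] /=; first by rewrite /pre_len big_nil.
case: (eqVneq b a) => [->|ba].
  by rewrite (negbTE aa) !pre_len_head.
have fb : a != (if b == a1 then c else b) by case: (b == a1); rewrite // eq_sym.
have ba' : a != b by rewrite eq_sym.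
by rewrite (pre_len_cons _ _ _ _ _ _ fb) (pre_len_cons _ _ _ _ _ _ ba') IH /=; case: ifP => [/eqP ->|_]; rewrite ?hl.
Qed.

Lemma pre_len_map_f2 (R : realType) (L : eqType) (len : L -> R) (a1 c : L) s :
  len a1 = len c -> c \notin s ->
  pre_len (map (fun b => if b == a1 then c else b) s) len c = pre_len s len a1.
Proof.
move=> hl; elim: s => [|b s IH] /=; first by rewrite /pre_len !big_nil.
rewrite inE negb_or => /andP[cb cs].
case: ifP => [/eqP ->|ba]; first by rewrite !pre_len_head.
have ab : a1 != b by rewrite eq_sym ba.
by rewrite (pre_len_cons _ _ _ _ _ _ cb) (pre_len_cons _ _ _ _ _ _ ab) IH.
Qed.

Lemma mkseq_add (T : Type) (f : nat -> T) k m :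
  mkseq f (k + m)%N = mkseq f k ++ mkseq (fun i => f (k + i)%N) m.
Proof.
by rewrite /mkseq iotaD map_cat add0n -[in iota k m](addn0 k) iotaDl -map_comp.
Qed.

Theorem proposition4p4 (R : realType) (L : eqType)
  (l r : R) (a1 : L) (rest : seq L) (len : L -> R) (pi : L -> L) :
  is_iet (a1 :: rest) len pi ->
  \sum_(a <- a1 :: rest) len a = r - l ->
  len a1 = len (pi a1) ->
  a1 != pi a1 ->
  let T := iet l (a1 :: rest) len pi in
  let l' := l + len a1 in
  let J := fun y : R => (l' <= y) && (y < r) in
  let pi' := fun a : L => if pi a == a1 then pi a1 else pi a in
  (forall x, J x -> induced T J x = iet l' rest len pi' x) /\
  (forall x, J x -> forall n : nat,
     let u := phi_prefix a1 (pi a1) (traj a1 l' rest len (induced T J) x) n in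
     u = mkseq (traj a1 l (a1 :: rest) len T x) (size u)).
Proof.
move=> [ual pos pp] hsum hlen hne T l' J pi'.
have hl' : l' = l + len a1 by [].
have [a1r urest] : a1 \notin rest /\ uniq rest by case/andP: ual.
have posr : forall b, b \in rest -> 0 < len b.
  by move=> b bin; apply: pos; rewrite inE bin orbT.
have mp : forall b, (b \in map pi (a1 :: rest)) = (b \in a1 :: rest) := perm_mem pp.
have umap : uniq (pi a1 :: map pi rest) by rewrite -[_ :: _]/(map pi (a1 :: rest)) (perm_uniq pp).
have cnot : pi a1 \notin map pi rest by case/andP: umap.
have crest : pi a1 \in rest.
  by move: (mp (pi a1)); rewrite map_f ?mem_head // inE (eq_sym (pi a1)) (negbTE hne) /= => <-.
have posm : forall b, b \in map pi (a1 :: rest) -> 0 < len b.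
  by move=> b; rewrite mp; apply: pos.
have posm' : forall b, b \in map pi rest -> 0 < len b.
  by move=> b bin; apply: posm; rewrite /= inE bin orbT.
have summ : \sum_(b <- map pi (a1 :: rest)) len b = r - l by rewrite (perm_big _ pp).
have hsum' : \sum_(b <- rest) len b = r - l'.
  by move: hsum; rewrite big_cons hl' opprD addrA => <-; ring.
have hP : forall b, b \in a1 :: rest -> pre_len (map pi (a1 :: rest)) len b + len b <= r - l.
  by move=> b bin; rewrite -summ; apply: pre_len_le => //; rewrite mp.
have hPge : forall b, b != pi a1 -> len a1 <= pre_len (map pi (a1 :: rest)) len b.
  move=> b bc; rewrite /= pre_len_cons // hlen lerDl; exact: pre_len_ge0.
have hP0 : pre_len (map pi (a1 :: rest)) len (pi a1) = 0 by rewrite /= pre_len_head.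
have mpi' : map pi' rest = map (fun b => if b == a1 then pi a1 else b) (map pi rest).
  by rewrite -map_comp.
have key : forall y, J y -> exists b, [/\ in_subint l' rest len b y,
    in_subint l (a1 :: rest) len b y, J (induced T J y) &
   ((b != pi a1 /\ induced T J y = T y /\ iet l' rest len pi' y = T y) \/
    (b = pi a1 /\ letter a1 l (a1 :: rest) len (T y) = a1 /\
       induced T J y = T (T y) /\ iet l' rest len pi' y = T (T y)))].
  move=> y /andP[h1 h2].
  have h2' : y < l' + \sum_(b <- rest) len b by rewrite hsum' addrC subrK.
  have [b hb] := @in_subint_exists _ _ rest len l' y urest posr h1 h2'.
  have brest : b \in rest by case/andP: hb.
  have ba1 : b != a1 by apply: contraNneq a1r => <-.
  have hb' : in_subint l (a1 :: rest) len b y.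
    by move: hb; rewrite /in_subint inE brest orbT hl' pre_len_cons // !addrA.
  have Ty : T y = y + (pre_len (map pi (a1 :: rest)) len b - (len a1 + pre_len rest len b)).
    by rewrite /T (iet_val _ _ _ _ _ _ _ _ ual pos hb') /tau pre_len_cons.
  have yb : l' + pre_len rest len b <= y < l' + pre_len rest len b + len b.
    by case/and3P: hb => _ -> ->.
  exists b; case: (eqVneq b (pi a1)) => [bc|bc].
  -
    subst b.
    rewrite hP0 in Ty.
    have hg := hPge a1 hne.
    have hp := hP a1 (mem_head _ _).
    have Tyin : in_subint l (a1 :: rest) len a1 (T y).
      rewrite /in_subint mem_head pre_len_head addr0 /=; case/andP: yb => y1 y2.
      rewrite Ty; apply/andP; split.
        move: y1 hl'; clear; move=> *; lra.
      move: y2 hl' hlen; clear; move=> *; lra.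
    have TTy : T (T y) = T y + pre_len (map pi (a1 :: rest)) len a1.
      by rewrite {1}/T (iet_val _ _ _ _ _ _ _ _ ual pos Tyin) /tau pre_len_head subr0.
    have JTT : J (T (T y)).
      rewrite /J TTy; move: Tyin; rewrite /in_subint pre_len_head addr0 => /and3P[_ t1 t2].
      apply/andP; split.
        move: hg t1 hl'; clear; move=> *; lra.
      move: hp t2; clear; move=> *; lra.
    have nJT : ~~ J (T y).
      rewrite /J; move: Tyin; rewrite /in_subint pre_len_head addr0 => /and3P[_ t1 t2].
      apply/negP => /andP[t3 t4]; move: t2 t3 hl'; clear; move=> *; lra.
    have ind : induced T J y = T (T y).
      rewrite /induced (@return_timeE _ T J y 2%N) //.
      by move=> [|[|m]].
    split => //; first by rewrite ind.
    right; split => //; split; first exact: (letter_val _ _ _ _ _ _ _ _ ual pos Tyin).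
    split => //.
    rewrite (iet_val _ _ _ _ _ _ _ _ urest posr hb) /tau mpi' TTy Ty pre_len_map_f2 //.
    rewrite /= pre_len_cons // -hlen.
    ring.
  - have hg := hPge _ bc.
    have hp : pre_len (map pi (a1 :: rest)) len b + len b <= r - l.
      by apply: hP; rewrite inE brest orbT.
    have JT : J (T y).
      rewrite /J Ty; case/andP: yb => y1 y2; apply/andP; split.
        move: hg y1 hl'; clear; move=> *; lra.
      move: hp y2 hl'; clear; move=> *; lra.
    have ind : induced T J y = T y.
      rewrite /induced (@return_timeE _ T J y 1%N) //.
      by move=> m m0 m1; move: (leq_ltn_trans m0 m1).
    split => //; first by rewrite ind.
    left; split => //; split => //.
    rewrite (iet_val _ _ _ _ _ _ _ _ urest posr hb) /tau mpi' Ty pre_len_map_f // /= pre_len_cons // hlen.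
    ring.
split.
  move=> x Jx; have [b [_ _ _ [[_ [-> ->]]|[_ [_ [-> ->]]]]]] := key x Jx; done.
move=> x Jx n.
suff gen : forall n y, J y ->
  phi_prefix a1 (pi a1) (traj a1 l' rest len (induced T J) y) n =
  mkseq (traj a1 l (a1 :: rest) len T y)
    (size (phi_prefix a1 (pi a1) (traj a1 l' rest len (induced T J) y) n)).
  exact: gen.
elim=> [|k IH] y Jy; first by [].
have split_pp : phi_prefix a1 (pi a1) (traj a1 l' rest len (induced T J) y) k.+1 =
   phi_sub a1 (pi a1) (letter a1 l' rest len y) ++
   phi_prefix a1 (pi a1) (traj a1 l' rest len (induced T J) (induced T J y)) k.
  rewrite /phi_prefix /=.
  have -> : iota 1 k = map (addn 1) (iota 0 k) by rewrite -iotaDl.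
  rewrite -map_comp; congr (_ ++ flatten _); apply: eq_map => i /=.
  by rewrite /traj add1n iterSr.
have [b [hb hb' Jind H]] := key y Jy.
rewrite split_pp (letter_val _ _ _ _ _ _ _ _ urest posr hb).
set U := phi_prefix _ _ _ k.
have hv0 : traj a1 l (a1 :: rest) len T y 0 = b.
  exact: (letter_val _ _ _ _ _ _ _ _ ual pos hb').
case: H => [[bc [ind _]]|[bc [lT [ind _]]]].
  rewrite /phi_sub (negbTE bc) size_cat mkseq_add /= {1}/U (IH _ Jind) -/U hv0.
  congr (_ :: _); apply: eq_mkseq => i.
  by rewrite /traj add1n iterSr ind.
rewrite /phi_sub bc eqxx size_cat mkseq_add /= {1}/U (IH _ Jind) -/U -bc hv0.
congr [:: _, _ & _]; first by rewrite /traj /= lT.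
apply: eq_mkseq => i.
by rewrite /traj add2n !iterSr ind.
Qed.
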